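(* Let $t\ge 1$ be an integer and $n \geq 2t+110$. Then $D_t > n^{n-2t-17}$, where \[ D_t:= \min_{\substack{F \text{ forest}\\|F|=t}} \ \min_{\substack{T_0 \in \mathcal{T}_n \setminus \mathcal{S}_n \\ |T_0 \cap F| < t}} \ |\mathcal{T}_n[T_0;F]|. \]
   Context: $\mathcal{T}_n$ is the set of labelled spanning trees of $K_n$ (vertex set $[n]$), each identified with its edge set in $\binom{[n]}{2}$; forests are likewise identified with their edge sets and $|F|$ is the number of edges. $\mathcal{S}_n\subset\mathcal{T}_n$ is the set of stars (spanning trees with a vertex of degree $n-1$). For a forest $F$ and $T_0\in\mathcal{T}_n$, $\mathcal{T}_n[T_0;F]:=\{T\in\mathcal{T}_n : F\subseteq T,\ (T\cap T_0)\setminus F=\emptyset\}$, the trees containing $F$ that share no edge with $T_0$ outside $F$. The minimum in $D_t$ ranges over all forests $F$ of $K_n$ with $t$ edges and all non-star spanning trees $T_0$ with $|T_0\cap F|<t$. *)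

(* Defs.v *)
From mathcomp Require Import all_boot.
Set Implicit Arguments. Unset Strict Implicit. Unset Printing Implicit Defensive.

(* Graphs on vertex set [n] = 'I_n, identified with their edge sets:
   an edge is a 2-element subset of 'I_n. *)
Definition edgeset (n : nat) := {set {set 'I_n}}.

Definition simple_edges n (E : edgeset n) : bool :=
  [forall e in E, #|e| == 2].

Definition adj n (E : edgeset n) : rel 'I_n :=
  fun x y => (x != y) && ([set x; y] \in E).

Definition connected_graph n (E : edgeset n) : bool :=
  [forall x : 'I_n, forall y : 'I_n, connect (adj E) x y].

(* acyclic: no edge lies on a cycle, i.e. removing any edge {x,y}
   disconnects x from y *)
Definition acyclic n (E : edgeset n) : bool :=
  [forall x : 'I_n, forall y : 'I_n, (x != y) && ([set x; y] \in E) ==>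
    ~~ connect (adj (E :\ [set x; y])) x y].

Definition is_forest n (F : edgeset n) : bool :=
  simple_edges F && acyclic F.

Definition is_spanning_tree n (T : edgeset n) : bool :=
  [&& simple_edges T, acyclic T & connected_graph T].

Definition degree n (E : edgeset n) (v : 'I_n) : nat :=
  #|[set e in E | v \in e]|.

Definition is_star n (T : edgeset n) : bool :=
  is_spanning_tree T && [exists v : 'I_n, degree T v == n.-1].

Definition trees_avoiding n (T0 F : edgeset n) : {set edgeset n} :=
  [set T : edgeset n | is_spanning_tree T && (F \subset T)
                       && ((T :&: T0) \subset F)].

(* Main.v *)
Require Import Defs.
From mathcomp Require Import all_boot zify.
Set Implicit Arguments. Unset Strict Implicit. Unset Printing Implicit Defensive.

Section Par.
Variable n : nat.
Implicit Types (p q : {ffun 'I_n -> 'I_n}).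

Definition rankedh p (h : 'I_n -> nat) := forall v, p v != v -> h (p v) < h v.
Definition ranked p := exists h, rankedh p h.
Definition root_of p v := iter n p v.
Definition rts p := [set v | p v == v].
Definition Ep p : edgeset n := [set [set v; p v] | v in [set v | p v != v]].

Lemma iter_fixed p x k : p x = x -> iter k p x = x.
Proof. by move=> px; elim: k => //= k ->. Qed.

Lemma hmono p h : rankedh p h -> forall k x, h (iter k p x) <= h x.
Proof.
move=> rh; elim=> // k IH x; rewrite iterS.
case: (eqVneq (p (iter k p x)) (iter k p x)) => [->|ne]; first exact: IH.
exact: leq_trans (ltnW (rh _ ne)) (IH x).
Qed.

Lemma root_fix p : ranked p -> forall v, p (root_of p v) = root_of p v.
Proof.
case=> h rh v; apply/eqP; apply/negPn/negP => nf.
have nfi : forall i, i <= n -> p (iter i p v) != iter i p v.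
  move=> i le; apply: contra nf => /eqP fi; apply/eqP.
  have := iter_fixed (n - i) fi; rewrite -iterD subnK // /root_of => ->; exact: fi.
have dec : forall i j, i < j -> j <= n -> h (iter j p v) < h (iter i p v).
  move=> i j lt le; have e : j = (j - i.+1) + i.+1 by rewrite subnK.
  rewrite e iterD iterS.
  apply: leq_ltn_trans (hmono rh _ _) _; apply: rh; apply: nfi.
  by apply: leq_trans (ltnW lt) le.
have inj : injective (fun i : 'I_n.+1 => iter i p v).
  move=> i j /= eij; apply/val_inj/eqP; rewrite eqn_leq; apply/andP; split; rewrite leqNgt.
    apply/negP => lt; have := dec _ _ lt (ltnSE (ltn_ord i)); by rewrite eij ltnn.
  apply/negP => lt; have := dec _ _ lt (ltnSE (ltn_ord j)); by rewrite eij ltnn.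
by have := leq_card _ inj; rewrite !card_ord ltnn.
Qed.

Lemma root_of_fix p v : p v = v -> root_of p v = v.
Proof. exact: iter_fixed. Qed.

Lemma root_of_p p : ranked p -> forall v, root_of p (p v) = root_of p v.
Proof. by move=> rp v; rewrite /root_of -iterSr iterS root_fix. Qed.

Lemma root_of_iter p : ranked p -> forall k v, root_of p (iter k p v) = root_of p v.
Proof. by move=> rp; elim=> // k IH v; rewrite iterS root_of_p. Qed.

Lemma root_uniq p : ranked p -> forall k v r, p r = r -> iter k p v = r -> root_of p v = r.
Proof.
move=> rp k v r pr ik; rewrite -(root_of_iter rp k) ik; exact: root_of_fix.
Qed.

Lemma root_rt p : ranked p -> forall v, root_of p v \in rts p.
Proof. by move=> rp v; rewrite inE root_fix. Qed.

Lemma rank_ind (h : 'I_n -> nat) (P : 'I_n -> Prop) :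
  (forall v, (forall u, h u < h v -> P u) -> P v) -> forall v, P v.
Proof.
move=> IH v; move: {2}(h v) (leqnn (h v)) => k; elim: k v => [|k IHk] v le.
  by apply: IH => u; rewrite ltnNge (leq_trans le).
apply: IH => u lt; apply: IHk; rewrite -ltnS; exact: leq_trans lt le.
Qed.

Lemma set2_inj (a b c d : 'I_n) : [set a; b] = [set c; d] ->
  (a = c /\ b = d) \/ (a = d /\ b = c).
Proof.
move=> E.
have ha : a \in [set c; d] by rewrite -E set21.
have hb : b \in [set c; d] by rewrite -E set22.
have hc : c \in [set a; b] by rewrite E set21.
have hd : d \in [set a; b] by rewrite E set22.
case/set2P: ha => ea; case/set2P: hb => eb; subst.
- by case/set2P: hd => ->; left.
- by left.
- by right.
- by case/set2P: hc => ->; left.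
Qed.

Lemma Ep_inj p : ranked p -> {in [set v | p v != v] &, injective (fun v => [set v; p v])}.
Proof.
case=> h rh u v; rewrite !inE => pu pv /set2_inj [[]//|[e1 e2]].
have := rh _ pu; have := rh _ pv; rewrite -e1 e2; move=> a b.
by have := ltn_trans a b; rewrite ltnn.
Qed.

Lemma card_Ep p : ranked p -> #|Ep p| + #|rts p| = n.
Proof.
move=> rp; rewrite /Ep card_in_imset; last exact: Ep_inj.
rewrite addnC; apply: etrans (etrans (cardsC (rts p)) (card_ord n)); congr (_ + _).
by apply: eq_card => v; rewrite !inE.
Qed.

End Par.

Section Step.
Variable n : nat.
Implicit Types (p q : {ffun 'I_n -> 'I_n}).

Definition upd p (r v : 'I_n) : {ffun 'I_n -> 'I_n} := [ffun w => if w == r then v else p w].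

Lemma upd_ranked p r v : ranked p -> p r = r -> root_of p v != r -> ranked (upd p r v).
Proof.
move=> rp pr rv; have [h rh] := rp.
exists (fun w => h w + (root_of p w == r) * (h v).+1) => w; rewrite !ffunE.
case: (eqVneq w r) => [-> _|wr pw].
  by rewrite (negbTE rv) root_of_fix // eqxx mul0n addn0 mul1n; lia.
rewrite root_of_p //; have := rh _ pw; lia.
Qed.

Lemma upd_root p r v : ranked p -> p r = r -> root_of p v != r -> forall w,
  root_of (upd p r v) w = if root_of p w == r then root_of p v else root_of p w.
Proof.
move=> rp pr rv; have rp' := upd_ranked rp pr rv; have [h rh] := rp.
set p' := upd p r v.
have A : forall w, root_of p w != r -> exists k, iter k p' w = root_of p w.
  move=> w; elim/(@rank_ind _ h): w => w IH rw.
  case: (eqVneq (p w) w) => pw; first by exists 0; rewrite /= root_of_fix.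
  have wr : w != r by apply: contraNneq pw => ->; rewrite pr.
  have [|k ik] := IH (p w) (rh _ pw); first by rewrite root_of_p.
  by exists k.+1; rewrite iterSr /p' ffunE (negbTE wr) ik root_of_p.
have fixr : forall u, root_of p u != r -> p' (root_of p u) = root_of p u.
  by move=> u ru; rewrite /p' ffunE (negbTE ru) root_fix.
move=> w; case: eqP => [rw|/eqP rw]; last first.
  by have [k ik] := A w rw; apply: (root_uniq rp' (fixr _ rw) ik).
have [kv ikv] := A v rv.
have B : forall w, root_of p w = r -> exists k, iter k p' w = root_of p v.
  move=> u; elim/(@rank_ind _ h): u => u IH ru.
  case: (eqVneq u r) => [->|ur].
    by exists kv.+1; rewrite iterSr /p' ffunE eqxx.
  case: (eqVneq (p u) u) => pu.
    by move: ru; rewrite root_of_fix // => /eqP; rewrite (negbTE ur).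
  have [|k ik] := IH (p u) (rh _ pu); first by rewrite root_of_p.
  by exists k.+1; rewrite iterSr /p' ffunE (negbTE ur).
by have [k ik] := B w rw; apply: (root_uniq rp' (fixr _ rv) ik).
Qed.

Lemma upd_rts p r v : p r = r -> v != r -> rts (upd p r v) = rts p :\ r.
Proof.
move=> pr vr; apply/setP => w; rewrite !inE ffunE.
by case: (eqVneq w r) => [->|wr]; rewrite ?eqxx ?(negbTE vr) ?pr //= (negbTE wr).
Qed.

Lemma upd_Ep p r v : p r = r -> v != r -> Ep (upd p r v) = [set r; v] |: Ep p.
Proof.
move=> pr vr; apply/setP => e; rewrite !inE; apply/imsetP/idP.
  case=> w; rewrite inE !ffunE; case: (eqVneq w r) => [-> _ ->|wr pw ->]; first by rewrite eqxx.
  by apply/orP; right; apply/imsetP; exists w; rewrite ?inE.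
case/orP => [/eqP->|/imsetP[w]]; first by exists r; rewrite ?inE ffunE eqxx // eq_sym.
rewrite inE => pw ->.
have wr : w != r by apply: contraNneq pw => ->; rewrite pr.
by exists w; rewrite ?inE ffunE (negbTE wr).
Qed.

End Step.

Lemma set2C' (T : finType) (x y : T) : [set x; y] = [set y; x].
Proof. by rewrite setUC. Qed.

Lemma adj_sym n (E : edgeset n) : symmetric (adj E).
Proof. by move=> x y; rewrite /adj eq_sym set2C'. Qed.

Lemma adj_csym n (E : edgeset n) : connect_sym (adj E).
Proof. exact/sym_connect_sym/adj_sym. Qed.

Section Rooting.
Variable n : nat.
Variable F : edgeset n.
Hypothesis sF : simple_edges F.
Hypothesis aF : acyclic F.

Definition Rm v := root (adj F) v.

Lemma Rm_adj u v : adj F u v -> Rm u = Rm v.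
Proof. by move=> a; apply/(rootP (adj_csym F))/connect1. Qed.

Fixpoint reach k v := if k is k'.+1 then reach k' v || [exists u, adj F v u && reach k' u]
  else v == Rm v.

Lemma reach_ex v : exists k, reach k v.
Proof.
have /connectP[s ps ls] := connect_root (adj F) v.
exists (size s); elim: s v ps ls => [|u s IH] v /=; first by move=> _ e; rewrite /Rm e.
case/andP=> avu ps ls; apply/orP; right; apply/existsP; exists u.
by rewrite avu IH // -ls; exact: (esym (Rm_adj avu)).
Qed.

Definition dd v := ex_minn (reach_ex v).

Lemma dd_reach v : reach (dd v) v.
Proof. by rewrite /dd; case: ex_minnP. Qed.

Lemma dd_min v k : reach k v -> dd v <= k.
Proof. by rewrite /dd; case: ex_minnP => m _ H /H. Qed.

Lemma dd0 v : (dd v == 0) = (v == Rm v).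
Proof.
apply/idP/idP => [/eqP e|e]; first by have := dd_reach v; rewrite e.
by rewrite -leqn0; apply: dd_min.
Qed.

Lemma dd_adj u v : adj F v u -> dd v <= (dd u).+1.
Proof.
move=> a; apply: dd_min => /=; apply/orP; right; apply/existsP; exists u.
by rewrite a dd_reach.
Qed.

Lemma dd_pred v k : dd v = k.+1 -> exists u, adj F v u && (dd u == k).
Proof.
move=> e; have := dd_reach v; rewrite e /= => /orP[r|/existsP[u /andP[a r]]].
  by have := dd_min r; rewrite e ltnn.
exists u; rewrite a eqn_leq dd_min //=; have := dd_adj a; rewrite e; lia.
Qed.

Definition p0 : {ffun 'I_n -> 'I_n} :=
  [ffun v => odflt v [pick u | adj F v u && (dd u < dd v)]].

Lemma p0_spec v : if dd v == 0 then p0 v = v else adj F v (p0 v) && (dd (p0 v) < dd v).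
Proof.
rewrite /p0 ffunE; case: pickP => [u /andP[a l]|none] /=.
  by rewrite a l; case: eqP l => // ->.
case: eqP => // /eqP /negbTE nz; exfalso.
have [u /andP[a /eqP e]] := dd_pred (esym (prednK (neq0_lt0n nz))).
have := none u; rewrite a e /=; move: nz; case: (dd v) => //= k _; by rewrite ltnSn.
Qed.

Lemma p0_ranked : rankedh p0 dd.
Proof.
move=> v; have := p0_spec v; case: eqP => [_ ->|_ /andP[_ //]]; by rewrite eqxx.
Qed.

Lemma p0_Ep : Ep p0 = F.
Proof.
apply/setP => e; apply/imsetP/idP.
  case=> v; rewrite inE => pv ->; have := p0_spec v.
  case: ifP => [_ pe|_ /andP[/andP[_ h] _] //]; by rewrite pe eqxx in pv.
move=> eF; have := forallP sF e; rewrite eF /= => /cards2P[x [y [xy ee]]].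
subst e.
have axy : adj F x y by rewrite /adj xy eF.
wlog le : x y xy eF axy / dd x <= dd y.
  move=> H; case: (leqP (dd x) (dd y)) => [le|lt]; first exact: H.
  rewrite set2C'; apply: H; first by rewrite eq_sym.
  - by rewrite set2C'.
  - by rewrite adj_sym.
  - exact: ltnW.
have dy : dd y != 0.
  apply/negP => /eqP d0; move: le; rewrite d0 leqn0 => dx0.
  have hx : x == Rm x by rewrite -dd0.
  have hy : y == Rm y by rewrite -dd0 d0.
  by move: xy; rewrite (eqP hx) (eqP hy) (Rm_adj axy) eqxx.
have := p0_spec y; rewrite (negbTE dy) => /andP[ayu lu].
set u := p0 y in ayu lu *.
have ux : u = x.
  apply/eqP/negPn/negP => ux.
  have := forallP (forallP aF x) y; rewrite xy eF /= => /negP; apply.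
  set e := [set x; y].
  have avoid : forall k w, dd w = k -> w != y -> dd w <= dd y -> connect (adj (F :\ e)) w (Rm w).
    elim=> [|k IH] w dw wy wle.
      by move/eqP: dw; rewrite dd0 => /eqP <-.
    have [u' /andP[a /eqP du']] := dd_pred dw.
    have u'y : u' != y by apply/negP => /eqP e'; move: wle; rewrite -e' du' dw ltnn.
    have a' : adj (F :\ e) w u'.
      move: a; rewrite /adj !inE => /andP[-> ->]; rewrite /= andbT.
      apply/negP => /eqP ee; have : y \in [set w; u'] by rewrite ee /e set22.
      by rewrite !inE ![y == _]eq_sym (negbTE wy) (negbTE u'y).
    apply: connect_trans (connect1 a') _; rewrite (Rm_adj a).
    apply: IH => //; rewrite du'; apply: ltnW; by rewrite -dw.
  have cx := avoid _ x erefl xy le.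
  have uy : u != y by move: ayu; rewrite /adj eq_sym => /andP[].
  have cu := avoid _ u erefl uy (ltnW lu).
  have ayu' : adj (F :\ e) y u.
    move: ayu; rewrite /adj !inE => /andP[-> ->]; rewrite /= andbT.
    apply/negP => /eqP ee; have : u \in [set x; y] by rewrite -/e -ee set22.
    by rewrite !inE (negbTE ux) (negbTE uy).
  apply: connect_trans cx _; rewrite (Rm_adj axy) (Rm_adj ayu).
  apply: (@connect_trans _ _ u); first by rewrite adj_csym.
  by rewrite adj_csym; exact: connect1.
have pyx : p0 y = x by exact: ux.
by exists y; [rewrite inE pyx | rewrite pyx set2C'].
Qed.

End Rooting.

Lemma forest_rooting n (F : edgeset n) : simple_edges F -> acyclic F ->
  exists p, ranked p /\ Ep p = F.
Proof. move=> sF aF; exists (p0 F); split; [by exists (dd F); apply: p0_ranked | exact: p0_Ep]. Qed.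

Lemma noconnect n (E : edgeset n) (Q : {set 'I_n}) x y :
  (forall u v, adj E u v -> u \in Q -> v \in Q) -> x \in Q -> y \notin Q ->
  ~~ connect (adj E) x y.
Proof.
move=> cl xQ yQ; apply/negP => c.
have := closed_connect (intro_closed (adj_csym E) cl) c.
by rewrite xQ (negbTE yQ).
Qed.

Lemma Ep_injective n (p q : {ffun 'I_n -> 'I_n}) :
  ranked p -> ranked q -> rts p = rts q -> Ep p = Ep q -> p = q.
Proof.
move=> rp [h rh] Er EE; apply/ffunP => v; elim/(@rank_ind _ h): v => v IH.
case: (eqVneq (q v) v) => qv.
  have : v \in rts q by rewrite inE qv.
  by rewrite -Er inE qv => /eqP.
have : [set v; q v] \in Ep p by rewrite EE; apply/imsetP; exists v; rewrite ?inE.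
case/imsetP => w; rewrite inE => pw /set2_inj [[<- <-]//|[ev ew]].
have hu := rh _ qv; have := IH _ hu; rewrite ew -ev => qw.
have : q w != w by rewrite -qw; apply: contra qv => /eqP e; rewrite ew -e.
move/rh; rewrite -qw -ew; move=> l; have := ltn_trans l hu; by rewrite ltnn.
Qed.

Section Tree2.
Variable n : nat.
Variable p : {ffun 'I_n -> 'I_n}.
Hypothesis rp : ranked p.
Variables a b : 'I_n.
Hypothesis ab : root_of p a != root_of p b.
Hypothesis rts2 : forall w, p w = w -> w = root_of p a \/ w = root_of p b.

Definition T2 : edgeset n := [set a; b] |: Ep p.

Lemma Ep_T2 : Ep p \subset T2.
Proof. exact: subsetUr. Qed.

Lemma a_neq_b : a != b.
Proof. by apply: contraNneq ab => ->. Qed.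

Lemma Ep_elem e : e \in Ep p -> exists2 u, p u != u & e = [set u; p u].
Proof. by case/imsetP => u; rewrite inE => ??; exists u. Qed.

Lemma conn_root (E : edgeset n) : Ep p \subset E -> forall w, connect (adj E) w (root_of p w).
Proof.
move=> sE; have [h rh] := rp.
move=> w; elim/(@rank_ind _ h): w => w IH.
case: (eqVneq (p w) w) => pw; first by rewrite root_of_fix.
apply: (@connect_trans _ _ (p w)); last by rewrite -(root_of_p rp w); apply: IH; apply: rh.
apply: connect1; rewrite /adj eq_sym pw /=; apply: (subsetP sE).
by apply/imsetP; exists w; rewrite ?inE.
Qed.

Lemma T2_simple : simple_edges T2.
Proof.
apply/forallP => e; apply/implyP; rewrite !inE => /orP[/eqP->|/Ep_elem[u pu ->]].
  by rewrite cards2 a_neq_b.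
by rewrite cards2 (eq_sym u) pu.
Qed.

Lemma T2_connected : connected_graph T2.
Proof.
have cr := conn_root Ep_T2.
have adjab : adj T2 a b by rewrite /adj a_neq_b !inE eqxx.
have toA : forall w, connect (adj T2) w (root_of p a).
  move=> w; apply: connect_trans (cr w) _.
  case: (rts2 (root_fix rp w)) => ->; first by [].
  apply: (@connect_trans _ _ b); first by rewrite adj_csym.
  apply: (@connect_trans _ _ a); first by rewrite adj_csym; apply: connect1.
  exact: cr.
apply/forallP => x; apply/forallP => y.
by apply: connect_trans (toA x) _; rewrite adj_csym.
Qed.

Lemma root_same e : e \in Ep p -> forall u v, [set u; v] = e -> root_of p u = root_of p v.
Proof.
case/Ep_elem => z pz -> u v /set2_inj [[-> ->]|[-> ->]]; by rewrite (root_of_p rp).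
Qed.

Lemma T2_acyclic : acyclic T2.
Proof.
apply/forallP => x; apply/forallP => y; apply/implyP => /andP[xy].
rewrite !inE => /orP[/eqP fab|fE].
  apply: (@noconnect _ _ [set w | root_of p w == root_of p x]).
  - move=> u v; rewrite /adj !inE => /and3P[_ ne /orP[/eqP uv|uE]].
      by move: ne; rewrite uv fab eqxx.
    by move=> /eqP <-; rewrite (root_same uE erefl).
  - by rewrite inE eqxx.
  - move: fab => /set2_inj [[-> ->]|[-> ->]]; rewrite inE //.
    by rewrite eq_sym.
have [w pw fw] := Ep_elem fE.
pose S := [set u | fconnect p u w].
have wS : w \in S by rewrite inE.
have pwS : p w \notin S.
  rewrite inE; apply/negP => /iter_findex; set k := findex _ _ _ => ik.
  have [h rh] := rp.
  have := hmono rh k (p w); rewrite ik => l; have := rh _ pw.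
  by rewrite ltnNge l.
have Sroot : forall u, u \in S -> root_of p u = root_of p w.
  move=> u; rewrite inE => /iter_findex ik; by rewrite -(root_of_iter rp (findex p u w) u) ik.
have S4 : forall z, p z != z -> [set z; p z] != [set w; p w] -> (z \in S) = (p z \in S).
  move=> z pz ne; rewrite !inE; apply/idP/idP => [c|c].
    have zw : z != w by apply: contraNneq ne => ->.
    move: (iter_findex c); case: (findex _ z w) => [/= e|k]; first by rewrite e eqxx in zw.
    by rewrite iterSr => <-; apply: fconnect_iter.
  exact: connect_trans (fconnect1 _ z) c.
clearbody S.
pose cross := (a \in S) != (b \in S).
pose Q := [set u | (u \in S) || (cross && (root_of p u != root_of p w))].
have Qw : w \in Q by rewrite inE wS.
have Qpw : p w \notin Q.
  by rewrite inE negb_or pwS (root_of_p rp) eqxx andbF.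
have Qab : (a \in Q) = (b \in Q).
  rewrite !inE /cross; case aS: (a \in S); case bS: (b \in S) => //=.
    by rewrite -(Sroot _ aS) eq_sym ab.
  by rewrite -(Sroot _ bS) ab.
have Qedge : forall z, p z != z -> [set z; p z] != [set w; p w] -> (z \in Q) = (p z \in Q).
  by move=> z pz ne; rewrite !inE (root_of_p rp) (S4 _ pz).
clearbody Q.
have cl : forall u v, adj (T2 :\ [set x; y]) u v -> (u \in Q) = (v \in Q).
  move=> u v; rewrite /adj !inE => /and3P[uv ne /orP[/eqP uvab|uE]].
    by case/set2_inj: uvab => [[-> ->]|[-> ->]].
  have [z pz ez] := Ep_elem uE.
  have nz : [set z; p z] != [set w; p w] by rewrite -ez -fw.
  have Qz := Qedge z pz nz.
  by case/set2_inj: ez => [[-> ->]|[-> ->]].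
have key : ~~ connect (adj (T2 :\ [set x; y])) w (p w).
  apply: noconnect Qw Qpw => u v /cl ->.
  done.
case/set2_inj: (fw) => [[ex ey]|[ex ey]]; move: key; rewrite ex ey //.
by rewrite adj_csym set2C'.
Qed.

Lemma T2_tree : is_spanning_tree T2.
Proof. by rewrite /is_spanning_tree T2_simple T2_acyclic T2_connected. Qed.

End Tree2.

Lemma card_dep (X Y : finType) (A : {set X}) (f : X -> {set Y}) L :
  (forall x, x \in A -> L <= #|f x|) ->
  #|A| * L <= #|[set xy : X * Y | (xy.1 \in A) && (xy.2 \in f xy.1)]|.
Proof.
move=> H; set D := [set xy : X * Y | _].
rewrite -[#|D|]sum1_card (partition_big (fun xy : X * Y => xy.1) (mem A)); last first.
  by move=> xy; rewrite inE => /andP[].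
rewrite -sum_nat_const; apply: leq_sum => x xA.
rewrite sum1_card.
have inj : injective (fun y : Y => (x, y)) by move=> y1 y2 [].
have -> : #|[pred xy | (xy \in D) && (xy.1 == x)]| = #|f x|.
  rewrite -(card_imset _ inj); apply: eq_card => xy; rewrite !inE; apply/andP/imsetP.
    case=> /andP[_ h] /eqP e; exists xy.2; rewrite -?e //; by case: xy e h => ?? /= ->.
  by case=> y yf ->; rewrite /= eqxx xA yf.
exact: H.
Qed.

Section ChBound.
Variable n : nat.
Variable T0 : edgeset n.
Hypothesis sT0 : simple_edges T0.
Hypothesis cT0 : #|T0| + 1 <= n.

Definition Ch (p : {ffun 'I_n -> 'I_n}) :=
  [set c : 'I_n * 'I_n | (p c.1 == c.1) && (root_of p c.2 != c.1) && ([set c.1; c.2] \notin T0)].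

Lemma Bad_card : #|[set c : 'I_n * 'I_n | [set c.1; c.2] \in T0]| <= #|T0| * 2.
Proof.
set Bad := [set c | _].
pose f (c : 'I_n * 'I_n) := ([set c.1; c.2], c.1 < c.2).
have inj : {in Bad &, injective f}.
  move=> [a b] [c d] _ _ [es eb] /=.
  case/set2_inj: es => [[-> ->]//|[ea ec]]; rewrite ea ec in eb *.
  by case: (ltngtP c d) eb => // /val_inj ->.
rewrite -(card_in_imset inj) -(card_bool) -cardsT -cardsX; apply: subset_leq_card.
apply/subsetP => x /imsetP[c]; rewrite inE => cT ->; by rewrite inE /= cT inE.
Qed.

Lemma Ch_card p : ranked p -> 3 <= #|rts p| -> (#|rts p| - 3) * n + 1 <= #|Ch p|.
Proof.
move=> rp k3; set k := #|rts p| in k3 *.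
set Full := [set c : 'I_n * 'I_n | c.1 \in rts p].
have cFull : #|Full| = k * n.
  have -> : Full = setX (rts p) setT by apply/setP => c; rewrite !inE andbT.
  by rewrite cardsX cardsT card_ord.
set Same := [set c : 'I_n * 'I_n | (c.1 \in rts p) && (root_of p c.2 == c.1)].
have cSame : #|Same| = n.
  have -> : Same = [set (root_of p v, v) | v in [set: 'I_n]].
    apply/setP => [[x y]]; rewrite !inE /=; apply/idP/imsetP.
      by case/andP => _ /eqP <-; exists y; rewrite ?inE.
    by case=> v _ [-> ->]; rewrite root_fix // !eqxx.
  by rewrite card_imset ?cardsT ?card_ord // => u v [].
have sub : Full :\: Same :\: [set c | [set c.1; c.2] \in T0] \subset Ch p.
  apply/subsetP => c; rewrite !inE => /and3P[nb /nandP ns rc].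
  by rewrite rc nb andbT; case: ns => //; rewrite rc.
have := subset_leq_card sub; rewrite cardsD; have := Bad_card.
set Bad := [set c | _] => cB.
have : #|(Full :\: Same) :&: Bad| <= #|Bad| by apply/subset_leq_card/subsetIr.
have sSF : Same \subset Full.
  by apply/subsetP => c; rewrite !inE; case/andP.
have : #|Same| <= #|Full| by apply/subset_leq_card.
rewrite cardsD (setIidPr sSF).
have e : (k - 3) * n + 3 * n = k * n by rewrite -mulnDl subnK.
move: e cFull cSame cB cT0; set a := #|_ :&: Bad|; set b := #|Ch p|.
set K := k * n; set K3 := (k - 3) * n; clearbody a b K K3; move: #|Full| #|Same| #|Bad| #|T0| => F1 S1 B1 T1; lia.
Qed.

End ChBound.

Section Pitman.
Variables (n : nat) (F T0 : edgeset n) (p0 : {ffun 'I_n -> 'I_n}) (x0 : 'I_n).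
Hypotheses (rp0 : ranked p0) (EF : Ep p0 = F) (sT0 : simple_edges T0) (cT0 : #|T0| + 1 <= n).

Definition k0 := #|rts p0|.
Definition M := k0.-2.
Definition State := ({ffun 'I_n -> 'I_n} * {ffun 'I_M -> 'I_n})%type.

Definition stp (j : nat) (s : State) (c : 'I_n * 'I_n) : State :=
  (upd s.1 c.1 c.2, [ffun i : 'I_M => if (i : nat) == j then c.1 else s.2 i]).

Definition Dj (Wj : {set State}) :=
  [set sc : State * ('I_n * 'I_n) | (sc.1 \in Wj) && (sc.2 \in Ch T0 sc.1.1)].

Fixpoint W j : {set State} :=
  if j is j'.+1 then [set stp j' sc.1 sc.2 | sc in Dj (W j')]
  else [set (p0, [ffun => x0])].

Record Inv j (s : State) : Prop := InvI {
  inv_r : ranked s.1;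
  inv_c : #|rts s.1| = k0 - j;
  inv_s : rts s.1 \subset rts p0;
  inv_F : F \subset Ep s.1;
  inv_T : forall e, e \in Ep s.1 -> e \in T0 -> e \in F;
  inv_σ : forall i : 'I_M, if i < j then (s.2 i \in rts p0) && (s.1 (s.2 i) != s.2 i)
                        else s.2 i == x0;
  inv_i : forall i i' : 'I_M, i < j -> i' < j -> s.2 i = s.2 i' -> i = i' }.

Lemma Inv0 : Inv 0 (p0, [ffun => x0]).
Proof.
split => //=; rewrite ?subn0 ?EF //.
by move=> i; rewrite ffunE.
Qed.

Lemma Ch_elim p r v : (r, v) \in Ch T0 p ->
  [/\ p r = r, root_of p v != r, v != r & [set r; v] \notin T0].
Proof.
rewrite inE /= => /andP[/andP[/eqP pr rv] nT]; split => //.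
by apply: contraNneq rv => ->; rewrite root_of_fix.
Qed.

Lemma Inv_step j s c : Inv j s -> c \in Ch T0 s.1 -> Inv j.+1 (stp j s c).
Proof.
case: s => p σ; case: c => r v; case=> /= rp cr sr sF sT sσ iσ.
case/Ch_elim => pr rv vr nT.
have rr : r \in rts p by rewrite inE pr.
have σr : forall i : 'I_M, i < j -> σ i != r.
  move=> i ij; have := sσ i; rewrite ij => /andP[_]; apply: contraNneq => ->; by rewrite pr.
rewrite /stp /=; split => /=.
- exact: upd_ranked.
- by rewrite upd_rts //; have := cardsD1 r (rts p); rewrite rr cr /=; lia.
- by rewrite upd_rts //; apply: subset_trans (subD1set _ _) sr.
- by rewrite upd_Ep //; apply: subset_trans sF (subsetUr _ _).
- move=> e; rewrite upd_Ep // !inE => /orP[/eqP->|eE]; first by rewrite (negbTE nT).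
  exact: sT.
- move=> i; rewrite !ffunE; case: (eqVneq (i : nat) j) => [ij|ij].
    by rewrite ij ltnSn (subsetP sr _ rr) eqxx.
  have := sσ i; rewrite [i < j.+1]ltnS [i <= j]leq_eqVlt (negbTE ij) /=.
  case: ifP => // ilt /andP[-> pi] /=.
  by rewrite (negbTE (σr _ ilt)).
- move=> i i'; rewrite !ffunE [i < j.+1]ltnS [i <= j]leq_eqVlt [i' < j.+1]ltnS [i' <= j]leq_eqVlt.
  case: (eqVneq (i : nat) j) => [ij|ij]; case: (eqVneq (i' : nat) j) => [ij'|ij'] //=.
  + by move=> _ _ _; apply: ord_inj; rewrite ij ij'.
  + by move=> _ lt' e; have := σr _ lt'; rewrite -e eqxx.
  + by move=> lt _ e; have := σr _ lt; rewrite e eqxx.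
  + exact: iσ.
Qed.

Lemma W_Inv j s : s \in W j -> Inv j s.
Proof.
elim: j s => [|j IH] s /=; first by move/set1P ->; exact: Inv0.
case/imsetP => [[s' c]]; rewrite inE /= => /andP[s'W cC] ->.
exact: Inv_step (IH _ s'W) cC.
Qed.

Lemma stp_inj j : j < M -> {in Dj (W j) &, injective (fun sc => stp j sc.1 sc.2)}.
Proof.
move=> jM [[p1 σ1] [r1 v1]] [[p2 σ2] [r2 v2]]; rewrite !inE /=.
move=> /andP[W1 C1] /andP[W2 C2] [e1 e2].
pose ij : 'I_M := Ordinal jM.
have := congr1 (fun f : {ffun 'I_M -> 'I_n} => f ij) e2; rewrite !ffunE /= eqxx => er; subst r2.
have := congr1 (fun f : {ffun 'I_n -> 'I_n} => f r1) e1; rewrite !ffunE eqxx => ev; subst v2.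
have C1' : (r1, v1) \in Ch T0 p1 by rewrite inE.
have C2' : (r1, v1) \in Ch T0 p2 by rewrite inE.
case/Ch_elim: C1' => pr1 _ _ _; case/Ch_elim: C2' => pr2 _ _ _.
have ep : p1 = p2.
  apply/ffunP => w; have := congr1 (fun f : {ffun 'I_n -> 'I_n} => f w) e1; rewrite !ffunE.
  by case: (eqVneq w r1) => [->|//]; rewrite pr1 pr2.
have eσ : σ1 = σ2.
  apply/ffunP => i; have := congr1 (fun f : {ffun 'I_M -> 'I_n} => f i) e2; rewrite !ffunE.
  case: (eqVneq (i : nat) j) => [ij'|//] _.
  case: (W_Inv W1) => _ _ _ _ _ s1 _; case: (W_Inv W2) => _ _ _ _ _ s2 _.
  have := s1 i; have := s2 i; rewrite ij' ltnn => /eqP -> /eqP ->; done.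
by rewrite ep eσ.
Qed.

Lemma W_card j : j <= M -> \prod_(i < j) ((M.-1 - i) * n + 1) <= #|W j|.
Proof.
elim: j => [_|j IH jM]; first by rewrite big_ord0 cards1.
rewrite big_ord_recr /= (card_in_imset (stp_inj jM)).
have H : forall s, s \in W j -> (M.-1 - j) * n + 1 <= #|(fun s : State => Ch T0 s.1) s|.
  move=> s /W_Inv [rs cr _ _ _ _ _].
  have h3 : 3 <= #|rts s.1| by rewrite cr; move: jM; rewrite /M; lia.
  apply: leq_trans (Ch_card sT0 cT0 rs h3).
  by rewrite cr /M; apply: leq_add => //; apply: leq_mul => //; lia.
apply: (leq_trans _ (card_dep H)).
by apply: leq_mul (IH (ltnW jM)) (leqnn _).
Qed.

Definition P2 := [set s.1 | s in W M].

Lemma WM_card : #|W M| <= #|P2| * k0 ^_ M.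
Proof.
pose Sg := [set σ : {ffun 'I_M -> 'I_n} in ffun_on (rts p0) | injectiveb σ].
have cSg : #|Sg| = k0 ^_ M.
  by rewrite card_inj_ffuns_on card_ord.
rewrite -cSg -cardsX; apply: subset_leq_card; apply/subsetP => [[p σ]] sW.
have [_ _ _ _ _ sσ iσ] := W_Inv sW.
rewrite inE /=; apply/andP; split; first by apply/imsetP; exists (p, σ).
rewrite inE; apply/andP; split.
  by apply/ffun_onP => i; have := sσ i; rewrite ltn_ord => /andP[].
by apply/injectiveP => i i'; apply: iσ.
Qed.

End Pitman.

Lemma two_elems (T : finType) (A : {set T}) x y :
  #|A| = 2 -> x \in A -> y \in A -> x != y -> A = [set x; y].
Proof.
move=> cA xA yA xy; apply/esym/eqP; rewrite eqEcard cA cards2 xy andbT.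
by apply/subsetP => z; rewrite !inE => /orP[/eqP->|/eqP->].
Qed.

Section Final.
Variables (n : nat) (F T0 : edgeset n) (p0 : {ffun 'I_n -> 'I_n}) (x0 : 'I_n).
Hypotheses (rp0 : ranked p0) (EF : Ep p0 = F) (sT0 : simple_edges T0) (cT0 : #|T0| + 1 <= n).
Hypotheses (tT0 : is_spanning_tree T0) (nsT0 : ~~ is_star T0).
Hypothesis k3 : 3 <= k0 p0.

Lemma star_of x : (forall b, b != x -> [set x; b] \in T0) -> is_star T0.
Proof.
move=> H; rewrite /is_star tT0 /=; apply/existsP; exists x; apply/eqP.
rewrite /degree.
have -> : [set e in T0 | x \in e] = [set [set x; b] | b in [set~ x]].
  apply/setP => e; rewrite !inE; apply/andP/imsetP.
    case=> eT xe; have := forallP sT0 e; rewrite eT /= => /cards2P[u [v [uv ee]]].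
    move: xe; rewrite ee !inE => /orP[/eqP xu|/eqP xv].
      exists v; last by rewrite xu.
      by rewrite !inE xu eq_sym.
    exists u; last by rewrite xv set2C'.
    by rewrite !inE xv.
  case=> b; rewrite !inE => bx ->; split; first exact: H.
  by rewrite !inE eqxx.
rewrite card_in_imset ?cardsC1 ?card_ord //.
move=> b b'; rewrite !inE => bx b'x /set2_inj [[_ ->]//|[e1 e2]].
by move: bx; rewrite e2 eqxx.
Qed.

Lemma cross_ex p : ranked p -> #|rts p| = 2 ->
  exists c : 'I_n * 'I_n, (root_of p c.1 != root_of p c.2) && ([set c.1; c.2] \notin T0).
Proof.
move=> rp c2.
case: (boolP [exists c : 'I_n * 'I_n, (root_of p c.1 != root_of p c.2) && ([set c.1; c.2] \notin T0)]) => [/existsP //|/existsPn H].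
exfalso.
have H' : forall a b, root_of p a != root_of p b -> [set a; b] \in T0.
  move=> a b ne; have := H (a, b); rewrite /= ne /=; exact: negbNE.
have /cards2P [r1 [r2 [r12 er]]] : #|rts p| == 2 by rewrite c2.
have r1in : r1 \in rts p by rewrite er set21.
have r2in : r2 \in rts p by rewrite er set22.
have r1r : p r1 = r1 by move: r1in; rewrite inE => /eqP.
have r2r : p r2 = r2 by move: r2in; rewrite inE => /eqP.
set C := [set u | root_of p u == r1].
have r1C : r1 \in C by rewrite inE root_of_fix.
have r2C : r2 \notin C by rewrite inE root_of_fix // eq_sym.
have cross : forall a b, a \in C -> b \notin C -> [set a; b] \in T0.
  move=> a b; rewrite !inE => /eqP ea nb; apply: H'; by rewrite ea eq_sym.
have prod : #|C| * #|~: C| <= #|T0|.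
  rewrite -cardsX.
  have inj : {in setX C (~: C) &, injective (fun ab : 'I_n * 'I_n => [set ab.1; ab.2])}.
    move=> [a b] [a' b']; rewrite !inE /= => /andP[aC bC] /andP[a'C b'C].
    case/set2_inj => [[-> ->]//|[ea eb]].
    by move: aC; rewrite ea (negbTE b'C).
  rewrite -(card_in_imset inj); apply/subset_leq_card/subsetP => e /imsetP[[a b]].
  move=> /setXP[aC bC] ->; apply: cross => //; by move: bC; rewrite inE.
have sum : #|C| + #|~: C| = n by rewrite cardsC card_ord.
have c1 : 0 < #|C| by apply/card_gt0P; exists r1.
have c2' : 0 < #|~: C| by apply/card_gt0P; exists r2; rewrite inE.
have : (#|C| == 1) || (#|~: C| == 1).
  apply/negPn/negP; rewrite negb_or => /andP[a b].
  have : 2 <= #|C| by rewrite ltn_neqAle eq_sym a c1.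
  have : 2 <= #|~: C| by rewrite ltn_neqAle eq_sym b c2'.
  move: prod sum cT0; nia.
case/orP => /eqP one; apply/negP: nsT0; apply/negPn.
  apply: (star_of (x := r1)) => b bx; apply: cross => //.
  apply/negP => bC; have /cards1P [z ez] : #|C| == 1 by rewrite one.
  move: r1C bC; rewrite ez !inE => /eqP e1 /eqP e2.
  by move: bx; rewrite e1 e2 eqxx.
apply: (star_of (x := r2)) => a ax; rewrite set2C'; apply: cross => //.
apply/negPn/negP => aC; have /cards1P [z ez] : #|~: C| == 1 by rewrite one.
have : a \in ~: C by rewrite inE aC.
have : r2 \in ~: C by rewrite inE r2C.
rewrite ez !inE => /eqP e2 /eqP e1.
by move: ax; rewrite e1 e2 eqxx.
Qed.

Definition crs p := [pick c : 'I_n * 'I_n | (root_of p c.1 != root_of p c.2) && ([set c.1; c.2] \notin T0)].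

Definition gT p :=
  let c := odflt (x0, x0) (crs p) in (T2 p c.1 c.2, (c, (root_of p c.1, root_of p c.2))).

Lemma P2_inv p : p \in P2 T0 p0 x0 -> [/\ ranked p, #|rts p| = 2, F \subset Ep p &
  (forall e, e \in Ep p -> e \in T0 -> e \in F)].
Proof.
case/imsetP => s /(W_Inv rp0 EF sT0 cT0) [rs cr _ sF sT _ _] ->; split => //.
by rewrite cr /M; move: k3; lia.
Qed.

Lemma crs_some p : p \in P2 T0 p0 x0 -> exists c, crs p = Some c /\
  (root_of p c.1 != root_of p c.2) && ([set c.1; c.2] \notin T0).
Proof.
case/P2_inv => rp c2 _ _; rewrite /crs; case: pickP => [c h|none]; first by exists c.
by have [c h] := cross_ex rp c2; have := none c; rewrite h.
Qed.

Lemma P2_trees : #|P2 T0 p0 x0| <= #|trees_avoiding T0 F| * (n * n * (n * n)).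
Proof.
have inj : {in P2 T0 p0 x0 &, injective gT}.
  move=> p q pP qP; rewrite /gT.
  have [c [-> /andP[rc nc]]] := crs_some pP.
  have [c' [-> /andP[rc' nc']]] := crs_some qP.
  move=> /= [eT ec er1 er2]; subst c'.
  have [rp cp _ _] := P2_inv pP; have [rq cq _ _] := P2_inv qP.
  have nE : forall r, ranked r -> root_of r c.1 != root_of r c.2 -> [set c.1; c.2] \notin Ep r.
    move=> r rr ne; apply/negP => h; have := root_same rr h (erefl _).
    by move/eqP; rewrite (negbTE ne).
  have eE : Ep p = Ep q.
    by rewrite -(setU1K (nE _ rp rc)) -(setU1K (nE _ rq rc')); rewrite /T2 in eT; rewrite eT.
  have rtsE : forall r, ranked r -> #|rts r| = 2 -> root_of r c.1 != root_of r c.2 ->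
      rts r = [set root_of r c.1; root_of r c.2].
    by move=> r rr c2 ne; apply: two_elems => //; apply: root_rt.
  apply: Ep_injective => //.
  by rewrite (rtsE _ rp cp rc) (rtsE _ rq cq rc') er1 er2.
rewrite -(card_in_imset inj).
have -> : n * n * (n * n) = #|[set: ('I_n * 'I_n) * ('I_n * 'I_n)]|.
  by rewrite cardsT !card_prod card_ord.
rewrite -cardsX; apply/subset_leq_card/subsetP => T /imsetP [p pP ->].
rewrite inE /= in_setT andbT.
have [c [ec /andP[rc nc]]] := crs_some pP.
have [rp cp sF sT] := P2_inv pP.
rewrite /gT ec /= inE.
have rts2 : forall w, p w = w -> w = root_of p c.1 \/ w = root_of p c.2.
  move=> w pw; have : w \in rts p by rewrite inE pw.
  rewrite (two_elems cp (root_rt rp c.1) (root_rt rp c.2) rc) !inE.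
  by case/orP => /eqP ->; [left|right].
rewrite (T2_tree rp rc rts2) /=; apply/andP; split.
  by apply: subset_trans sF (Ep_T2 _ _ _).
apply/subsetP => e; rewrite !inE => /andP[/orP[/eqP ee|eE] eT].
  by move: nc; rewrite -ee eT.
exact: sT.
Qed.

End Final.

Lemma prod_lb0 m n : n ^ m.-1 * (m.-1)`! <= \prod_(i < m) (i * n + 1).
Proof.
elim: m => [|m IH]; first by rewrite big_ord0.
rewrite big_ord_recr /=; case: m IH => [|m] IH; first by rewrite big_ord0 expn0.
move: IH; rewrite /= expnS factS => IH.
set P := \prod_(i < m.+1) _ in IH *.
have : n ^ m * m`! * (n * m.+1) <= P * (m.+1 * n + 1).
  apply: leq_mul IH _; rewrite mulnC; exact: leq_addr.
apply: leq_trans; move: (n ^ m) (m`!) => A B; apply: eq_leq; lia.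
Qed.

Lemma prod_lb m n : n ^ m.-1 * (m.-1)`! <= \prod_(i < m) ((m.-1 - i) * n + 1).
Proof.
apply: leq_trans (prod_lb0 m n) _.
rewrite (reindex_inj rev_ord_inj) /=; apply: eq_leq; apply: eq_bigr => i _.
by congr (_ * _ + _); case: i => i /= lt; lia.
Qed.

Lemma ffact_bound M n : 1 <= M -> M.+2 <= n -> M.+2 ^_ M <= n ^ 3 * (M.-1)`!.
Proof.
move=> M1 Mn.
have e := @ffact_fact M.+2 M (leq_trans (leqnSn _) (leqnSn _)).
have le1 : M.+2 ^_ M <= M.+2`! by rewrite -e leq_pmulr // fact_gt0.
apply: leq_trans le1 _.
case: M M1 Mn {e} => [//|M] _ Mn /=; rewrite !factS.
have h3 : M.+3 * M.+2 * M.+1 <= n ^ 3.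
  rewrite !expnS expn0 muln1 mulnA; apply: leq_mul; first apply: leq_mul; lia.
by rewrite !mulnA; apply: leq_mul.
Qed.

Theorem proposition3p1 (n t : nat) :
  1 <= t -> 2 * t + 110 <= n ->
  forall (F T0 : edgeset n),
    is_forest F -> #|F| = t ->
    is_spanning_tree T0 -> ~~ is_star T0 ->
    #|T0 :&: F| < t ->
    n ^ (n - 2 * t - 17) < #|trees_avoiding T0 F|.
Proof.
move=> t1 nt F T0 fF cF tT0 nsT0 _.
have n0 : 0 < n by lia.
pose x0 : 'I_n := Ordinal n0.
case/andP: fF => sF aF.
have tT0' := tT0; case/and3P: tT0' => sT0 aT0 _.
have [p0 [rp0 EF]] := forest_rooting sF aF.
have [q0 [rq0 EQ]] := forest_rooting sT0 aT0.
have cT0 : #|T0| + 1 <= n.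
  have := card_Ep rq0; rewrite EQ => e.
  have : 0 < #|rts q0| by apply/card_gt0P; exists (root_of q0 x0); apply: root_rt.
  lia.
have ck : k0 p0 = n - t by have := card_Ep rp0; rewrite EF cF /k0; lia.
have k3 : 3 <= k0 p0 by rewrite ck; lia.
have h1 := W_card x0 rp0 EF sT0 cT0 (leqnn (M p0)).
have h2 := WM_card x0 rp0 EF sT0 cT0.
have h3 := P2_trees x0 rp0 EF sT0 cT0 tT0 nsT0 k3.
have h4 := prod_lb (M p0) n.
have eM : k0 p0 = (M p0).+2 by rewrite /M; lia.
have M1 : 1 <= M p0 by rewrite /M; lia.
have Mn : (M p0).+2 <= n by rewrite -eM ck; lia.
have h5 := ffact_bound M1 Mn.
rewrite eM in h2.
set m := M p0 in h1 h2 h4 h5 M1 Mn eM.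
set Tr := #|trees_avoiding T0 F| in h3 *.
have key : n ^ m.-1 * (m.-1)`! <= (Tr * (n * n * (n * n)) * n ^ 3) * (m.-1)`!.
  apply: leq_trans h4 _; apply: leq_trans h1 _; apply: leq_trans h2 _.
  rewrite -mulnA; exact: leq_mul h3 h5.
rewrite leq_pmul2r ?fact_gt0 // in key.
have e7 : n * n * (n * n) * n ^ 3 = n ^ 7 by rewrite !expnS expn0; lia.
rewrite -mulnA e7 in key.
have lt : n ^ (n - 2 * t - 17) * n ^ 7 < n ^ m.-1.
  rewrite -expnD ltn_exp2l; last by lia.
  have : m = n - t - 2 by rewrite /m /M ck; lia.
  move=> ->; lia.
have := leq_trans lt key; rewrite ltn_pmul2r //; by rewrite expn_gt0 n0.
Qed.
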